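(* Let $G$ be any graph and let $C$ be a set of $k$ bicliques of $G$ such that every two of them are mutually included. Then the elements of $C$ can be ordered as $P_1,\dots,P_k$ and their sides named $P_i=X_iY_i$ ($1\le i\le k$) so that $X_1\subsetneq X_2\subsetneq\cdots\subsetneq X_k$ and $Y_k\subsetneq Y_{k-1}\subsetneq\cdots\subsetneq Y_1$.
   Context: All graphs are finite and simple. A biclique of a graph $G$ is a set $P\subseteq V(G)$ such that the induced subgraph $G[P]$ is a complete bipartite graph with both parts nonempty, and $P$ is inclusion-maximal with this property. Since $G[P]$ is connected, its bipartition into two nonempty independent sets $X,Y$ (every vertex of $X$ adjacent to every vertex of $Y$) is unique; we write $P=XY$ to mean $P=X\cup Y$ with $X,Y$ these two parts, called the sides of $P$. Two bicliques $P,Q$ of $G$ are mutually included if their sides can be named $P=X_PY_P$, $Q=X_QY_Q$ so that $X_Q\subsetneq X_P$ and $Y_P\subsetneq Y_Q$. *)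

(* Defs.v *)
From mathcomp Require Import all_boot.
Set Implicit Arguments. Unset Strict Implicit. Unset Printing Implicit Defensive.

Definition simple_graph (T : finType) (e : rel T) : Prop :=
  symmetric e /\ irreflexive e.

(* X, Y are the two sides of a complete bipartite induced subgraph on P = X ∪ Y:
   both nonempty, disjoint, independent, and every x in X adjacent to every y in Y. *)
Definition sides (T : finType) (e : rel T) (P X Y : {set T}) : Prop :=
  [/\ P = X :|: Y, X != set0, Y != set0 & [disjoint X & Y]] /\
  [/\ {in X &, forall x x', ~~ e x x'},
      {in Y &, forall y y', ~~ e y y'} &
      {in X & Y, forall x y, e x y}].

Definition cbip (T : finType) (e : rel T) (P : {set T}) : Prop :=
  exists X Y, sides e P X Y.

Definition biclique (T : finType) (e : rel T) (P : {set T}) : Prop :=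
  cbip e P /\ forall Q : {set T}, cbip e Q -> P \subset Q -> Q = P.

Definition mutually_included (T : finType) (e : rel T) (P Q : {set T}) : Prop :=
  exists XP YP XQ YQ, [/\ sides e P XP YP, sides e Q XQ YQ,
                          XQ \proper XP & YP \proper YQ].

(* Main.v *)
Require Import Defs.
From mathcomp Require Import all_boot.
From Stdlib Require Import ClassicalEpsilon.
Set Implicit Arguments. Unset Strict Implicit.
Lemma sides_sym (T : finType) (e : rel T) P X Y :
  symmetric e -> sides e P X Y -> sides e P Y X.
Proof.
move=> sym [[-> nX nY d] [iX iY c]]; split; split => //.
- by rewrite setUC.
- by rewrite disjoint_sym.
- by move=> y x yY xX; rewrite sym; apply: c.
Qed.

Lemma sides_uniq0 (T : finType) (e : rel T) P X Y X' Y' x :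
  sides e P X Y -> sides e P X' Y' -> x \in X -> x \in X' -> X' = X /\ Y' = Y.
Proof.
move=> [[EP nX nY d] [iX iY c]] [[EP' nX' nY' d'] [iX' iY' c']] xX xX'.
have inU : forall z, z \in X' :|: Y' = (z \in X :|: Y) by move=> z; rewrite -EP' -EP.
have YY' : Y \subset Y'.
  apply/subsetP => y yY.
  have : y \in X' :|: Y' by rewrite inU inE yY orbT.
  rewrite inE; case/orP => // yX'.
  by move: (iX' _ _ xX' yX'); rewrite c.
have XX' : X \subset X'.
  apply/subsetP => z zX.
  case/set0Pn: nY => y yY.
  have : z \in X' :|: Y' by rewrite inU inE zX.
  rewrite inE; case/orP => // zY'.
  by move: (iY' _ _ zY' (subsetP YY' _ yY)); rewrite c.
have X'X : X' \subset X.
  apply/subsetP => z zX'.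
  have : z \in X :|: Y by rewrite -inU inE zX'.
  rewrite inE; case/orP => // zY.
  by move: (subsetP YY' _ zY); rewrite (disjointFr d' zX').
have Y'Y : Y' \subset Y.
  apply/subsetP => z zY'.
  have : z \in X :|: Y by rewrite -inU inE zY' orbT.
  rewrite inE; case/orP => // zX.
  by move: (subsetP XX' _ zX); rewrite (disjointFl d' zY').
by split; apply/eqP; rewrite eqEsubset ?X'X ?XX' ?Y'Y ?YY'.
Qed.

Lemma sides_uniq (T : finType) (e : rel T) P X Y X' Y' :
  symmetric e -> sides e P X Y -> sides e P X' Y' ->
  (X' = X /\ Y' = Y) \/ (X' = Y /\ Y' = X).
Proof.
move=> sym s s'.
have [[EP nX nY d] _] := s.
case/set0Pn: nX => x xX.
have : x \in X' :|: Y'.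
  by have [[<- _ _ _] _] := s'; rewrite EP inE xX.
rewrite inE; case/orP => [xX'|xY'].
  by left; apply: sides_uniq0 s s' xX xX'.
have [A B] := sides_uniq0 s (sides_sym sym s') xX xY'.
by right; split.
Qed.
Definition orient (T : finType) (X0 Y0 XQ YQ : {set T}) :=
  (XQ \subset X0 /\ Y0 \subset YQ) \/ (X0 \subset XQ /\ YQ \subset Y0).

Lemma cross (T : finType) (e : rel T) P0 X0 Y0 Q XQ YQ R XR YR :
  sides e P0 X0 Y0 -> sides e Q XQ YQ -> sides e R XR YR ->
  orient X0 Y0 XQ YQ -> orient X0 Y0 XR YR ->
  XR \subset YQ -> XQ \subset YR -> False.
Proof.
move=> [[_ nX0 _ d0] [iX0 _ _]] [[_ nXQ _ _] _] [[_ nXR _ _] [_ _ cR]] oQ oR RQ QR.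
case/set0Pn: nXQ => q qQ; case/set0Pn: nXR => r rR; case/set0Pn: nX0 => z z0.
case: oQ => [[Q1 Q2]|[Q1 Q2]]; case: oR => [[R1 R2]|[R1 R2]].
- move: (iX0 _ _ (subsetP R1 _ rR) (subsetP Q1 _ qQ)).
  by rewrite (cR _ _ rR (subsetP QR _ qQ)).
- by move: (subsetP R2 _ (subsetP QR _ qQ)); rewrite (disjointFr d0 (subsetP Q1 _ qQ)).
- by move: (subsetP Q2 _ (subsetP RQ _ rR)); rewrite (disjointFr d0 (subsetP R1 _ rR)).
- by move: (subsetP Q2 _ (subsetP RQ _ (subsetP R1 _ z0))); rewrite (disjointFr d0 z0).
Qed.

Lemma orient_swap (T : finType) (X0 Y0 XQ YQ : {set T}) :
  orient X0 Y0 XQ YQ -> orient Y0 X0 YQ XQ.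
Proof. by case=> [[a b]|[a b]]; [right|left]. Qed.

Lemma claimB (T : finType) (e : rel T) P0 X0 Y0 Q XQ YQ R XR YR :
  symmetric e ->
  sides e P0 X0 Y0 -> sides e Q XQ YQ -> sides e R XR YR ->
  orient X0 Y0 XQ YQ -> orient X0 Y0 XR YR ->
  mutually_included e Q R ->
  (XQ \proper XR /\ YR \proper YQ) \/ (XR \proper XQ /\ YQ \proper YR).
Proof.
move=> sym s0 sQ sR oQ oR [A [B [C [D [sA sC p1 p2]]]]].
case: (sides_uniq sym sQ sA) => -[E1 E2]; case: (sides_uniq sym sR sC) => -[E3 E4];
  rewrite E1 E2 E3 E4 in p1 p2.
- by right.
- exfalso; apply: (cross (sides_sym sym s0) (sides_sym sym sQ) (sides_sym sym sR)
     (orient_swap oQ) (orient_swap oR)); exact: proper_sub.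
- exfalso; apply: (cross s0 sQ sR oQ oR); exact: proper_sub.
- by left.
Qed.
Lemma final (T : finType) (e : rel T) (C : {set {set T}})
  (f : {set T} -> {set T} * {set T}) :
  (forall Q, Q \in C -> sides e Q (f Q).1 (f Q).2) ->
  (forall Q R, Q \in C -> R \in C -> Q != R ->
     ((f Q).1 \proper (f R).1 /\ (f R).2 \proper (f Q).2) \/
     ((f R).1 \proper (f Q).1 /\ (f Q).2 \proper (f R).2)) ->
  exists (Pf X Y : 'I_#|C| -> {set T}),
    [/\ injective Pf,
        (forall P, P \in C <-> exists i, Pf i = P),
        (forall i, sides e (Pf i) (X i) (Y i)) &
        (forall i j : 'I_#|C|, i < j -> X i \proper X j /\ Y j \proper Y i)].
Proof.
move=> Hs Hb.
pose r := fun Q R : {set T} => (f Q).1 \subset (f R).1.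
pose s := sort r (enum C).
have ss : size s = #|C| by rewrite size_sort cardE.
have us : uniq s by rewrite sort_uniq enum_uniq.
have ms : forall P, (P \in s) = (P \in C) by move=> P; rewrite mem_sort mem_enum.
have inC : forall i : 'I_#|C|, nth set0 s i \in C.
  by move=> i; rewrite -ms mem_nth // ss.
have srt : sorted r s.
  apply: (@sort_sorted_in _ (mem C)); last by apply/allP => x; rewrite mem_enum.
  move=> Q R QC RC; rewrite /r.
  case: (eqVneq Q R) => [->|nQR]; first by rewrite subxx.
  by case: (Hb _ _ QC RC nQR) => -[/proper_sub -> _]; rewrite ?orbT.
have tr : transitive r by move=> a b c; rewrite /r; apply: subset_trans.
exists (fun i => nth set0 s i), (fun i => (f (nth set0 s i)).1),
       (fun i => (f (nth set0 s i)).2); split.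
- move=> i j /eqP; rewrite nth_uniq ?ss //; by move/eqP/val_inj.
- move=> P; split.
    move=> PC; have Ps : P \in s by rewrite ms.
    have Hi : index P s < #|C| by rewrite -ss index_mem.
    by exists (Ordinal Hi); rewrite /= nth_index.
  by case=> i <-.
- by move=> i; apply: Hs.
- move=> i j ij.
  have Hr : r (nth set0 s i) (nth set0 s j).
    by apply: (sorted_ltn_nth tr) => //; rewrite inE ss.
  have ne : nth set0 s i != nth set0 s j.
    by rewrite nth_uniq ?ss // neq_ltn ij.
  case: (Hb _ _ (inC i) (inC j) ne) => // -[H1 H2].
  by move: H1; rewrite properE; rewrite /r in Hr; rewrite Hr andbF.
Qed.

Theorem lemma4 (T : finType) (e : rel T) (k : nat) (C : {set {set T}}) :
  simple_graph e ->
  (forall P, P \in C -> biclique e P) ->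
  #|C| = k ->
  (forall P Q, P \in C -> Q \in C -> P != Q -> mutually_included e P Q) ->
  exists (Pf X Y : 'I_k -> {set T}),
    [/\ injective Pf,
        (forall P, P \in C <-> exists i, Pf i = P),
        (forall i, sides e (Pf i) (X i) (Y i)) &
        (forall i j : 'I_k, i < j -> X i \proper X j /\ Y j \proper Y i)].
Proof.
move=> [sym irr] Hbi Hk Hm; subst k.
case: (set_0Vmem C) => [C0 | [P0 HP0]].
  apply: (@final _ _ _ (fun _ => (set0, set0))).
    by move=> Q; rewrite C0 inE.
  by move=> Q R; rewrite C0 inE.
have [[X0 [Y0 s0]] _] := Hbi _ HP0.
have Hex : forall Q, exists XY : {set T} * {set T},
    Q \in C -> sides e Q XY.1 XY.2 /\ orient X0 Y0 XY.1 XY.2.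
  move=> Q; case QC: (Q \in C); last by exists (set0, set0).
  case: (eqVneq Q P0) => [->|nQ].
    by exists (X0, Y0) => _; split => //; left; split; apply: subxx.
  have [A [B [C' [D [sA sC p1 p2]]]]] := Hm _ _ HP0 QC ltac:(by rewrite eq_sym).
  case: (sides_uniq sym s0 sA) => -[E1 E2]; rewrite E1 E2 in p1 p2.
    exists (C', D) => _; split => //; left; split; exact: proper_sub.
  exists (D, C') => _; split; first exact: sides_sym.
  by right; split; exact: proper_sub.
pose f Q := proj1_sig (constructive_indefinite_description _ (Hex Q)).
have Hf : forall Q, Q \in C -> sides e Q (f Q).1 (f Q).2 /\ orient X0 Y0 (f Q).1 (f Q).2.
  by move=> Q QC; exact: (proj2_sig (constructive_indefinite_description _ (Hex Q)) QC).
apply: (@final _ _ _ f).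
  by move=> Q /Hf [].
move=> Q R QC RC nQR; have [sQ oQ] := Hf _ QC; have [sR oR] := Hf _ RC.
exact: (claimB sym s0 sQ sR oQ oR (Hm _ _ QC RC nQR)).
Qed.
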